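(* Let $1\le k\le d$, let $\gamma(t)=(t,t^2,\dots,t^d)$ be the moment curve in $\mathbb{R}^d$, and let $U_1,U_2$ be two $k$-element sets of points on $\gamma$. Write $W=U_1\cup U_2=\{w_1,\dots,w_m\}$ with $w_i=\gamma(t_i)$ and $t_1<\dots<t_m$. Call a subset $\{w_{i_1},\dots,w_{i_q}\}\subseteq W$ with $i_1<\dots<i_q$ contiguous if $i_q-i_1=q-1$. Suppose that for some $j\in\{1,2\}$ one can write $U_j=Y_S\cup X_1\cup\dots\cup X_t\cup Y_E$ ($t\ge0$) with all of $Y_S,X_1,\dots,X_t,Y_E$ contiguous, $Y_S=\emptyset$ or $w_1\in Y_S$, $Y_E=\emptyset$ or $w_m\in Y_E$, and at most $d-k$ of the sets $X_i$ of odd cardinality. Then $\operatorname{conv}U_1\cap\operatorname{conv}U_2=\operatorname{conv}(U_1\cap U_2)$. *)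

(* Defs.v *)
From HB Require Import structures.
From mathcomp Require Import all_boot all_order all_algebra.
Set Implicit Arguments. Unset Strict Implicit. Unset Printing Implicit Defensive.
Import Order.TTheory GRing.Theory Num.Theory.
Local Open Scope ring_scope.

Definition moment (R : realFieldType) (d : nat) (t : R) : 'rV[R]_d :=
  \row_(i < d) t ^+ i.+1.

Definition conv (R : realFieldType) (d : nat) (S : seq 'rV[R]_d) (x : 'rV[R]_d) : Prop :=
  exists lam : 'I_(size S) -> R,
    (forall i, 0 <= lam i) /\ \sum_(i < size S) lam i = 1 /\
    x = \sum_(i < size S) lam i *: S`_i.

(* W = U1 u U2 listed by increasing parameter: w_1, ..., w_m *)
Definition Wseq (R : realFieldType) (U1 U2 : seq R) : seq R :=
  sort (fun a b : R => a <= b) (undup (U1 ++ U2)).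

Definition contiguous (R : realFieldType) (W X : seq R) : Prop :=
  exists i q : nat, X =i take q (drop i W).

Definition good_decomposition (R : realFieldType) (d k : nat) (W U : seq R) : Prop :=
  exists (YS YE : seq R) (Xs : seq (seq R)),
    perm_eq U (YS ++ flatten Xs ++ YE) /\
    contiguous W YS /\ contiguous W YE /\
    (forall X, X \in Xs -> contiguous W X) /\
    (YS = [::] \/ head 0 W \in YS) /\
    (YE = [::] \/ last 0 W \in YE) /\
    (count (fun X : seq R => odd (size X)) Xs <= d - k)%N.

(* Main.v *)
Require Import Defs.
From HB Require Import structures.
From mathcomp Require Import all_boot all_order all_algebra.
From mathcomp Require Import lra ring zify.
Import Order.TTheory GRing.Theory Num.Theory.
Set Implicit Arguments. Unset Strict Implicit. Unset Printing Implicit Defensive.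
Local Open Scope ring_scope.

Lemma nth_map_moment (R : realFieldType) (d : nat) (S : seq R) (i : nat) :
  (map (moment d) S)`_i = moment d S`_i.
Proof.
case: (ltnP i (size S)) => hi; first by rewrite (nth_map 0).
rewrite !nth_default ?size_map //.
by apply/rowP => j; rewrite !mxE expr0n.
Qed.

Definition convm (R : realFieldType) (d : nat) (S : seq R) (x : 'rV[R]_d) :=
  exists mu : R -> R, (forall u, u \in S -> 0 <= mu u) /\
    \sum_(u <- S) mu u = 1 /\ x = \sum_(u <- S) mu u *: moment d u.

Lemma sum_seq_ord (V : nmodType) (T : Type) (x0 : T) (S : seq T) (F : T -> V) :
  \sum_(u <- S) F u = \sum_(i < size S) F (nth x0 S i).
Proof. by rewrite (big_nth x0) big_mkord. Qed.

Lemma convE (R : realFieldType) (d : nat) (S : seq R) (x : 'rV[R]_d) :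
  uniq S -> conv (map (moment d) S) x <-> convm S x.
Proof.
move=> uS; split.
- case=> lam [l0 [l1 lx]].
  pose mu u := \sum_(i < size (map (moment d) S) | S`_i == u) lam i.
  have key : forall (V : lmodType R) (G : R -> V),
      \sum_(u <- S) mu u *: G u = \sum_(i < size (map (moment d) S)) lam i *: G S`_i.
    move=> V G.
    under eq_bigr => u _ do rewrite /mu scaler_suml.
    under eq_bigr => u _ do rewrite big_mkcond. rewrite exchange_big /=. apply: eq_bigr => i _.
    have hi : (i < size S)%N by rewrite -(size_map (moment d)).
    rewrite (bigD1_seq S`_i) ?mem_nth //= eqxx big1 ?addr0 //.
    by move=> u /negbTE; rewrite eq_sym => ->.
  exists mu; split; [|split].
  + by move=> u _; apply: sumr_ge0 => i _; exact: l0.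
  + have := key R^o (fun _ => 1).
    under eq_bigr do rewrite /GRing.scale /= mulr1.
    by move=> ->; under eq_bigr do rewrite /GRing.scale /= mulr1.
  + rewrite key lx; apply: eq_bigr => i _; by rewrite nth_map_moment.
- case=> mu [m0 [m1 mx]].
  exists (fun i => mu S`_i); split; [|split].
  + move=> i; apply: m0; apply: mem_nth; by rewrite -(size_map (moment d)).
  + by rewrite -m1 (sum_seq_ord 0) size_map.
    rewrite -[in RHS](big_mkord xpredT (fun i => mu S`_i *: (map (moment d) S)`_i)) size_map big_mkord.
    by rewrite mx (sum_seq_ord 0); apply: eq_bigr => i _; rewrite nth_map_moment.
Qed.

Definition affp (R : realFieldType) (d : nat) (p : {poly R}) (x : 'rV[R]_d) : R :=
  p`_0 + \sum_(i < d) p`_i.+1 * x 0 i.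

Lemma affp_moment (R : realFieldType) (d : nat) (p : {poly R}) t :
  (size p <= d.+1)%N -> affp p (moment d t) = p.[t].
Proof.
move=> sp; rewrite (horner_coef_wide t sp) big_ord_recl expr0 mulr1 /affp.
by congr (_ + _); apply: eq_bigr => i _; rewrite mxE.
Qed.

Lemma lin_part (R : realFieldType) (d : nat) (c : nat -> R) (S : seq R) (mu : R -> R) :
  \sum_(i < d) c i * (\sum_(u <- S) mu u *: moment d u) 0 i =
  \sum_(u <- S) mu u * \sum_(i < d) c i * moment d u 0 i.
Proof.
elim: S => [|a S IH].
  by rewrite !big_nil big1 // => i _; rewrite mxE mulr0.
rewrite !big_cons -IH mulr_sumr -big_split /=; apply: eq_bigr => i _.
by rewrite !mxE mulrDr mulrCA.
Qed.

Lemma affp_comb (R : realFieldType) (d : nat) (p : {poly R}) (S : seq R) (mu : R -> R) :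
  (size p <= d.+1)%N -> \sum_(u <- S) mu u = 1 ->
  affp p (\sum_(u <- S) mu u *: moment d u) = \sum_(u <- S) mu u * p.[u].
Proof.
move=> sp m1.
under [RHS]eq_bigr => u _ do rewrite -(affp_moment _ sp) /affp mulrDr.
rewrite big_split /= -big_distrl /= m1 mul1r /affp; congr (_ + _).
by rewrite (@lin_part _ _ (fun i => p`_i.+1)).
Qed.

Lemma sep_conv (R : realFieldType) (d : nat) (U V : seq R) (p : {poly R}) (x : 'rV[R]_d) :
  (size p <= d.+1)%N -> (forall u, u \in U -> 0 <= p.[u]) ->
  (forall u, u \in U -> u \notin V -> 0 < p.[u]) ->
  (forall v, v \in V -> p.[v] <= 0) ->
  convm U x -> convm V x -> convm [seq u <- U | u \in V] x.
Proof.
move=> sp pU pUV pV [mu [m0 [m1 mx]]] [nu [n0 [n1 nx]]].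
have e : \sum_(u <- U) mu u * p.[u] = \sum_(v <- V) nu v * p.[v].
  by rewrite -(affp_comb sp m1) -(affp_comb sp n1) -mx -nx.
have ge : 0 <= \sum_(u <- U) mu u * p.[u].
  by rewrite big_seq; apply: sumr_ge0 => u uU; rewrite mulr_ge0 ?m0 ?pU.
have le : \sum_(v <- V) nu v * p.[v] <= 0.
  rewrite big_seq; apply: sumr_le0 => v vV; rewrite mulr_ge0_le0 ?n0 ?pV //.
have z : \sum_(u <- U | u \in U) mu u * p.[u] == 0.
  by rewrite -big_seq eq_le ge andbT e.
move: z; rewrite psumr_eq0; last by move=> u uU; rewrite mulr_ge0 ?m0 ?pU.
move/allP => z.
have muz : forall u, u \in U -> u \notin V -> mu u = 0.
  move=> u uU uV; have := z u uU; rewrite uU /= mulf_eq0 => /orP[/eqP //|/eqP h].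
  by have := pUV u uU uV; rewrite h ltxx.
have keep : forall (W : lmodType R) (G : R -> W),
    \sum_(u <- [seq u <- U | u \in V]) mu u *: G u = \sum_(u <- U) mu u *: G u.
  move=> W G; rewrite big_filter big_mkcond [RHS]big_seq_cond.
  rewrite [LHS]big_seq_cond; apply: eq_bigr => u /andP[uU _].
  by case: ifP => // /negbT uV; rewrite muz ?scale0r.
exists mu; split; [|split].
- by move=> u; rewrite mem_filter => /andP[_ /m0].
- have := keep R^o (fun _ => 1); rewrite /GRing.scale /=.
  under eq_bigr do rewrite mulr1. under [in RHS]eq_bigr do rewrite mulr1.
  by move=> ->.
- by rewrite keep.
Qed.

Definition spec (R : realFieldType) (W V : seq R) (q : {poly R}) (B : seq R) :=
  forall w, w \in W -> [/\ (w \in B -> w \notin V -> q.[w] < 0),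
                          (w \in B -> w \in V -> q.[w] = 0) &
                          (w \notin B -> 0 < q.[w])].

Lemma spec_eq (R : realFieldType) (W V : seq R) q (B B' : seq R) :
  B =i B' -> spec W V q B -> spec W V q B'.
Proof. by move=> e s w wW; rewrite -!e; exact: s. Qed.

Lemma spec_one (R : realFieldType) (W V : seq R) : spec W V 1 [::].
Proof. by move=> w _; rewrite hornerC; split. Qed.

Lemma spec_mul (R : realFieldType) (W V : seq R) q1 q2 (B1 B2 : seq R) :
  (forall w, w \in B1 -> w \notin B2) ->
  spec W V q1 B1 -> spec W V q2 B2 -> spec W V (q1 * q2) (B1 ++ B2).
Proof.
move=> dis s1 s2 w wW; have [a1 b1 c1] := s1 w wW; have [a2 b2 c2] := s2 w wW.
rewrite hornerM mem_cat; split.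
- case/orP => wB wV.
    by rewrite pmulr_llt0 ?c2 ?dis // a1.
  have wB1 : w \notin B1 by apply/negP => /dis; rewrite wB.
  by rewrite pmulr_rlt0 ?c1 // a2.
- case/orP => wB wV.
    by rewrite b1 ?mul0r.
  by rewrite b2 ?mulr0.
- by rewrite negb_or => /andP[n1 n2]; rewrite mulr_gt0 ?c1 ?c2.
Qed.

Definition gapd (R : realFieldType) (W : seq R) (del : R) :=
  0 < del /\ forall w1 w2, w1 \in W -> w2 \in W -> w1 != w2 -> del < `|w1 - w2|.

Lemma gap_lt (R : realFieldType) (W : seq R) del w1 w2 :
  gapd W del -> w1 \in W -> w2 \in W -> w1 < w2 -> w1 + del < w2.
Proof.
move=> [_ g] h1 h2 lt; have := g _ _ h1 h2 (negbT (lt_eqF lt)).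
by rewrite ler0_norm ?subr_le0 ?ltW //; lra.
Qed.

Lemma pair_spec (R : realFieldType) (W V : seq R) del a b :
  gapd W del -> a \in W -> b \in W -> a <= b ->
  (forall w, w \in W -> w != a -> w != b -> w < a \/ b < w) ->
  exists q : {poly R}, (size q <= 3)%N /\ spec W V q [:: a; b].
Proof.
move=> g aW bW ab sep; have dp := g.1.
pose ra := if a \in V then a else a - del.
pose rb := if b \in V then b else b + del.
exists (('X - ra%:P) * ('X - rb%:P)); split.
  by rewrite (leq_trans (size_polyMleq _ _)) // !size_XsubC.
have raa : ra <= a by rewrite /ra; case: ifP => _; lra.
have rbb : b <= rb by rewrite /rb; case: ifP => _; lra.
move=> w wW; rewrite hornerM !hornerXsubC !inE; split.
- case/orP => /eqP -> wV.
    have e1 : ra = a - del by rewrite /ra (negbTE wV).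
    have e2 : a < rb.
      rewrite /rb; case: ifP => bV; last by lra.
      by rewrite lt_neqAle ab andbT; apply/negP => /eqP e; rewrite e bV in wV.
    nra.
  have e1 : rb = b + del by rewrite /rb (negbTE wV).
  have e2 : ra < b.
    rewrite /ra; case: ifP => aV; last by lra.
    by rewrite lt_neqAle ab andbT; apply/negP => /eqP e; rewrite -e aV in wV.
  nra.
- case/orP => /eqP -> wV.
    by rewrite /ra wV subrr mul0r.
  by rewrite /rb wV subrr mulr0.
- rewrite negb_or => /andP[na nb]; case: (sep w wW na nb) => lt.
    have := gap_lt g wW aW lt; rewrite /ra; case: ifP => _ h; nra.
  have := gap_lt g bW wW lt; rewrite /rb; case: ifP => _ h; nra.
Qed.

Lemma linL_spec (R : realFieldType) (W V : seq R) del x :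
  gapd W del -> x \in W -> (forall w, w \in W -> x <= w) ->
  exists q : {poly R}, (size q <= 2)%N /\ spec W V q [:: x].
Proof.
move=> g xW mn; have dp := g.1.
pose r := if x \in V then x else x + del.
exists ('X - r%:P); split; first by rewrite size_XsubC.
move=> w wW; rewrite hornerXsubC !inE; split.
- by move=> /eqP -> wV; rewrite /r (negbTE wV); lra.
- by move=> /eqP -> wV; rewrite /r wV subrr.
- move=> nx; have lt : x < w by rewrite lt_neqAle eq_sym nx mn.
  have := gap_lt g xW wW lt; rewrite /r; case: ifP => _ h; lra.
Qed.

Lemma linR_spec (R : realFieldType) (W V : seq R) del x :
  gapd W del -> x \in W -> (forall w, w \in W -> w <= x) ->
  exists q : {poly R}, (size q <= 2)%N /\ spec W V q [:: x].
Proof.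
move=> g xW mx; have dp := g.1.
pose r := if x \in V then x else x - del.
exists (r%:P - 'X); split.
  by rewrite -opprB size_opp size_XsubC.
move=> w wW; rewrite hornerD hornerN hornerC hornerX !inE; split.
- by move=> /eqP -> wV; rewrite /r (negbTE wV); lra.
- by move=> /eqP -> wV; rewrite /r wV subrr.
- move=> nx; have lt : w < x by rewrite lt_neqAle nx mx.
  have := gap_lt g wW xW lt; rewrite /r; case: ifP => _ h; lra.
Qed.

Lemma gap_aux (R : realFieldType) (x : R) (W : seq R) :
  exists e : R, 0 < e /\ forall w, w \in W -> w != x -> e < `|x - w|.
Proof.
elim: W => [|y W [e [e0 he]]]; first by exists 1.
case: (eqVneq y x) => [->|yx].
  exists e; split => // w; rewrite inE => /orP[/eqP ->|]; last exact: he.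
  by rewrite eqxx.
have n0 : 0 < `|x - y| by rewrite normr_gt0 subr_eq0 eq_sym.
exists (Order.min e (`|x - y| / 2)); split.
  by rewrite lt_min e0 /=; lra.
move=> w; rewrite inE => /orP[/eqP ->|wW] wx.
  by rewrite gt_min; apply/orP; right; lra.
by rewrite gt_min (he w wW wx).
Qed.

Lemma gap_exists (R : realFieldType) (W : seq R) : exists del, gapd W del.
Proof.
elim: W => [|x W [d0 [dp hd]]]; first by exists 1; split => //.
have [e [e0 he]] := gap_aux x W.
exists (Order.min d0 e); split; first by rewrite lt_min dp e0.
move=> w1 w2; rewrite !inE => /orP[/eqP ->|h1] /orP[/eqP ->|h2] ne.
- by rewrite eqxx in ne.
- by rewrite gt_min (he w2 h2) ?orbT // eq_sym.
- by rewrite gt_min distrC (he w1 h1) ?orbT.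
- by rewrite gt_min hd.
Qed.

Lemma consec (R : realFieldType) (W : seq R) i a b r :
  sorted (fun x y : R => x <= y) W -> drop i W = a :: b :: r ->
  a <= b /\ forall w, w \in W -> w != a -> w != b -> w < a \/ b < w.
Proof.
move=> sW e.
have [l eW] : exists l, W = l ++ [:: a, b & r] by exists (take i W); rewrite -e cat_take_drop.
subst W; move: sW; rewrite (sorted_pairwise le_trans) pairwise_cat => /and3P[/allrelP al _].
rewrite /= => /andP[/andP[ab /allP ar] /andP[/allP br _]].
split => // w; rewrite mem_cat !inE.
case/orP => [wl|/orP[/eqP->|/orP[/eqP->|wr]]] na nb.
- by left; rewrite lt_neqAle na (al w a wl (mem_head _ _)).
- by rewrite eqxx in na.
- by rewrite eqxx in nb.
- by right; rewrite lt_neqAle eq_sym nb br.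
Qed.

Lemma last_max (R : realFieldType) (W : seq R) i a :
  sorted (fun x y : R => x <= y) W -> drop i W = [:: a] ->
  forall w, w \in W -> w <= a.
Proof.
move=> sW e.
have [l eW] : exists l, W = l ++ [:: a] by exists (take i W); rewrite -e cat_take_drop.
subst W; move: sW; rewrite (sorted_pairwise le_trans) pairwise_cat => /and3P[/allrelP al _ _].
move=> w; rewrite mem_cat inE => /orP[wl|/eqP->//].
by apply: al; rewrite ?inE.
Qed.

Lemma head_min (R : realFieldType) (x : R) (W : seq R) :
  sorted (fun x y : R => x <= y) (x :: W) -> forall w, w \in x :: W -> x <= w.
Proof.
rewrite (sorted_pairwise le_trans) /= => /andP[/allP h _] w.
by rewrite inE => /orP[/eqP->//|/h].
Qed.

Lemma single_spec (R : realFieldType) (W V : seq R) del a :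
  gapd W del -> a \in W -> exists q : {poly R}, (size q <= 3)%N /\ spec W V q [:: a].
Proof.
move=> g aW.
have sep : forall w, w \in W -> w != a -> w != a -> w < a \/ a < w.
  by move=> w _ h _; have := lt_total h; case/orP; [left|right].
have [q [sq hq]] := pair_spec V g aW aW (lexx a) sep.
by exists q; split => //; apply: spec_eq hq => w; rewrite !inE orbb.
Qed.

Lemma drop2 (T : Type) (W : seq T) i a b r :
  drop i W = [:: a, b & r] -> drop i.+2 W = r.
Proof. move=> e. have -> : i.+2 = (2 + i)%N by []. rewrite -drop_drop. rewrite e. by rewrite /= drop0. Qed.

Lemma block_spec (R : realFieldType) (W V : seq R) del :
  sorted (fun x y : R => x <= y) W -> uniq W -> gapd W del ->
  forall q i, exists p : {poly R},
    (size p <= (size (take q (drop i W)) + odd (size (take q (drop i W)))).+1)%N /\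
    spec W V p (take q (drop i W)).
Proof.
move=> sW uW g q; elim: q {-2}q (leqnn q) => [|n IH] q hq i.
  rewrite leqn0 in hq; rewrite (eqP hq) take0; exists 1.
  by rewrite size_poly1; split => //; exact: spec_one.
case e: (drop i W) => [|a t].
  by exists 1; rewrite size_poly1; split => //; exact: spec_one.
have aW : a \in W by apply: (@mem_drop i); rewrite e mem_head.
have single : exists p : {poly R}, (size p <= (size [:: a] + odd (size [:: a])).+1)%N /\
    spec W V p [:: a] by have [p [sp hp]] := single_spec V g aW; exists p.
case: q hq => [|[|q]] hq.
- by exists 1; rewrite size_poly1; split => //; exact: spec_one.
- by rewrite /= take0.
case: t e => [|b r] e; first by [].
have [ab sep] := consec sW e.
have bW : b \in W by apply: (@mem_drop i); rewrite e !inE eqxx orbT.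
have [p1 [s1 h1]] := pair_spec V g aW bW ab sep.
have [p2 [s2 h2]] := IH q (ltnW (hq : (q < n)%N)) i.+2.
rewrite (drop2 e) in s2 h2.
exists (p1 * p2); split.
  rewrite /= (leq_trans (size_polyMleq _ _)) //.
  move: s1 s2; set m := size _; rewrite -/m; lia.
have := spec_mul _ h1 h2; apply.
have := uW; rewrite -(cat_take_drop i W) e cat_uniq => /and3P[_ _] /=.
rewrite !inE negb_or => /andP[/andP[_ ar] /andP[br _]] w.
rewrite !inE => /orP[]/eqP->; [move: ar|move: br]; apply: contra => /mem_take.
- by [].
- by [].
Qed.

Lemma blockR_spec (R : realFieldType) (W V : seq R) del :
  sorted (fun x y : R => x <= y) W -> uniq W -> gapd W del ->
  forall i, exists p : {poly R},
    (size p <= (size (drop i W)).+1)%N /\ spec W V p (drop i W).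
Proof.
move=> sW uW g i; move: {2}(size _) (leqnn (size (drop i W))) => n.
elim: n {-2}n (leqnn n) i => [|n IH] m hm i hs.
  have : size (drop i W) = 0%N by lia.
  move/size0nil => ->; exists 1; rewrite size_poly1; split => //; exact: spec_one.
case e: (drop i W) hs => [|a [|b r]] hs.
- by exists 1; rewrite size_poly1; split => //; exact: spec_one.
- have aW : a \in W by apply: (@mem_drop i); rewrite e mem_head.
  have [p [sp hp]] := linR_spec V g aW (last_max sW e).
  by exists p.
- have aW : a \in W by apply: (@mem_drop i); rewrite e mem_head.
  have bW : b \in W by apply: (@mem_drop i); rewrite e !inE eqxx orbT.
  have [ab sep] := consec sW e.
  have [p1 [s1 h1]] := pair_spec V g aW bW ab sep.
  have [p2 [s2 h2]] := IH n (leqnn n) i.+2 ltac:(rewrite (drop2 e); simpl in hs; lia).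
  rewrite (drop2 e) in s2 h2.
  exists (p1 * p2); split.
    rewrite /= (leq_trans (size_polyMleq _ _)) //; lia.
  have := spec_mul _ h1 h2; apply.
  have := uW; rewrite -(cat_take_drop i W) e cat_uniq => /and3P[_ _] /=.
  rewrite !inE negb_or => /andP[/andP[_ ar] /andP[br _]] w.
  by rewrite !inE => /orP[]/eqP->.
Qed.

Lemma prefix_spec (R : realFieldType) (W V : seq R) del :
  sorted (fun x y : R => x <= y) W -> uniq W -> gapd W del ->
  forall q, exists p : {poly R},
    (size p <= (size (take q W)).+1)%N /\ spec W V p (take q W).
Proof.
move=> sW uW g q.
case eW: W => [|x W'] .
  by exists 1; rewrite size_poly1; split => //; exact: spec_one.
case: q => [|q].
  by exists 1; rewrite size_poly1; split => //; exact: spec_one.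
rewrite -eW.
have := block_spec V sW uW g.
case o: (odd (size (take q.+1 W))) => bl.
- have xW : x \in W by rewrite eW mem_head.
  have mn : forall w, w \in W -> x <= w by rewrite eW; apply: head_min; rewrite -eW.
  have [p1 [s1 h1]] := linL_spec V g xW mn.
  have [p2 [s2 h2]] := bl q 1%N.
  have e1 : take q (drop 1 W) = take q W' by rewrite eW /= drop0.
  rewrite e1 in s2 h2.
  have e2 : size (take q.+1 W) = (size (take q W')).+1 by rewrite eW.
  rewrite e2 /= in o.
  exists (p1 * p2); split.
    rewrite e2 (leq_trans (size_polyMleq _ _)) //; move: s2.
    rewrite (negbTE o) addn0 => s2; move: s1 s2; set a := size p1; set b := size p2; lia.
  have ->: take q.+1 W = [:: x] ++ take q W' by rewrite eW.
  apply: spec_mul h1 h2.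
  have := uW; rewrite eW /= => /andP[xn _] w; rewrite inE => /eqP ->.
  by apply: contra xn => /mem_take.
- have [p [sp hp]] := bl q.+1 0%N.
  rewrite drop0 in sp hp; rewrite o addn0 in sp.
  by exists p.
Qed.

Lemma head_slice (T : eqType) (x0 : T) (W : seq T) q i :
  uniq W -> head x0 W \in take q (drop i W) -> take q (drop i W) = take q W.
Proof.
case: W => [|x W] //= /andP[xn _]; case: i => [|i] //=.
by move/mem_take/mem_drop => h; rewrite h in xn.
Qed.

Lemma last_slice (T : eqType) (x0 : T) (W : seq T) q i :
  uniq W -> last x0 W \in take q (drop i W) -> take q (drop i W) = drop i W.
Proof.
move=> uW h; case: (leqP (size (drop i W)) q) => hs; first by rewrite take_oversize.
exfalso; move: h uW.
have [y [t e]] : exists y t, drop q (drop i W) = y :: t.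
  case e: (drop q (drop i W)) => [|y t]; last by exists y, t.
  by have := size_drop q (drop i W); rewrite e /=; lia.
rewrite -{1 3}(cat_take_drop i W) -{1 3}(cat_take_drop q (drop i W)) e.
rewrite !last_cat /= => h; rewrite !cat_uniq => /and3P[_ _ /and3P[_ hh _]].
by apply: (negP hh); apply/hasP; exists (last y t) => //; exact: mem_last.
Qed.

Lemma size_eqmem (T : eqType) (s1 s2 : seq T) :
  uniq s1 -> uniq s2 -> s1 =i s2 -> size s1 = size s2.
Proof. by move=> u1 u2 e; apply: perm_size; apply: uniq_perm. Qed.

Lemma slice_uniq (T : eqType) (W : seq T) q i : uniq W -> uniq (take q (drop i W)).
Proof. by move=> u; apply: take_uniq; apply: drop_uniq. Qed.

Lemma xs_spec (R : realFieldType) (W V : seq R) del :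
  sorted (fun x y : R => x <= y) W -> uniq W -> gapd W del ->
  forall Xs : seq (seq R), uniq (flatten Xs) -> (forall X, X \in Xs -> contiguous W X) ->
  exists p : {poly R},
    (size p <= (size (flatten Xs) + count (fun X : seq R => odd (size X)) Xs).+1)%N /\
    spec W V p (flatten Xs).
Proof.
move=> sW uW g; elim => [|X Xs IH] /=.
  by move=> _ _; exists 1; rewrite size_poly1; split => //; exact: spec_one.
rewrite cat_uniq => /and3P[uX dis uXs] cX.
have [p2 [s2 h2]] := IH uXs (fun Y hY => cX Y (mem_behead (hY : Y \in behead (X :: Xs)))).
have [i [q eX]] := cX X (mem_head _ _).
have [p1 [s1 h1]] := block_spec V sW uW g q i.
have sz : size (take q (drop i W)) = size X.
  apply: size_eqmem; [exact: slice_uniq|exact: uX|by move=> w; rewrite eX].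
rewrite sz in s1; have {}h1 := spec_eq (fun w => esym (eX w)) h1.
exists (p1 * p2); split.
  rewrite size_cat (leq_trans (size_polyMleq _ _)) //; move: s1 s2.
  set a := size p1; set b := size p2; set c := size X; case: (odd c) => /=; lia.
apply: spec_mul h1 h2 => w wX; apply/negP => wF.
by move/hasP: dis; apply; exists w.
Qed.

Lemma end_spec (R : realFieldType) (W V : seq R) del (Y : seq R) :
  sorted (fun x y : R => x <= y) W -> uniq W -> gapd W del -> uniq Y ->
  contiguous W Y -> (Y = [::] \/ head 0 W \in Y) ->
  exists p : {poly R}, (size p <= (size Y).+1)%N /\ spec W V p Y.
Proof.
move=> sW uW g uY [i [q eY]] [->|hY].
  by exists 1; rewrite size_poly1; split => //; exact: spec_one.
have e : take q (drop i W) = take q W by apply: (head_slice (x0:=0) uW); rewrite -eY.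
rewrite e in eY; have [p [sp hp]] := prefix_spec V sW uW g q.
have sz : size (take q W) = size Y.
  apply: size_eqmem; [exact: take_uniq|exact: uY|by move=> w; rewrite eY].
rewrite sz in sp; exists p; split => //.
exact: spec_eq (fun w => esym (eY w)) hp.
Qed.

Lemma endR_spec (R : realFieldType) (W V : seq R) del (Y : seq R) :
  sorted (fun x y : R => x <= y) W -> uniq W -> gapd W del -> uniq Y ->
  contiguous W Y -> (Y = [::] \/ last 0 W \in Y) ->
  exists p : {poly R}, (size p <= (size Y).+1)%N /\ spec W V p Y.
Proof.
move=> sW uW g uY [i [q eY]] [->|hY].
  by exists 1; rewrite size_poly1; split => //; exact: spec_one.
have e : take q (drop i W) = drop i W by apply: (last_slice (x0:=0) uW); rewrite -eY.
rewrite e in eY; have [p [sp hp]] := blockR_spec V sW uW g i.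
have sz : size (drop i W) = size Y.
  apply: size_eqmem; [exact: drop_uniq|exact: uY|by move=> w; rewrite eY].
rewrite sz in sp; exists p; split => //.
exact: spec_eq (fun w => esym (eY w)) hp.
Qed.

Lemma construct (R : realFieldType) (d k : nat) (W U V : seq R) :
  sorted (fun x y : R => x <= y) W -> uniq W ->
  (forall w, (w \in W) = (w \in U) || (w \in V)) ->
  uniq U -> size U = k -> (k <= d)%N -> good_decomposition d k W U ->
  exists p : {poly R}, (size p <= d.+1)%N /\
    (forall u, u \in U -> 0 <= p.[u]) /\
    (forall u, u \in U -> u \notin V -> 0 < p.[u]) /\
    (forall v, v \in V -> p.[v] <= 0).
Proof.
move=> sW uW mW uU sU kd [YS [YE [Xs [pe [cS [cE [cX [hS [hE hc]]]]]]]]].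
have [del g] := gap_exists W.
have uA : uniq (YS ++ flatten Xs ++ YE) by rewrite -(perm_uniq pe).
move: (uA); rewrite cat_uniq => /and3P[uS d1 uB].
move: (uB); rewrite cat_uniq => /and3P[uX d2 uE].
have [pS [sS hS']] := end_spec V sW uW g uS cS hS.
have [pE [sE hE']] := endR_spec V sW uW g uE cE hE.
have [pX [sX hX]] := xs_spec V sW uW g uX cX.
have h2 : spec W V (pX * pE) (flatten Xs ++ YE).
  apply: spec_mul hX hE' => w wX; apply/negP => wE.
  by move/hasP: d2; apply; exists w.
have h3 : spec W V (pS * (pX * pE)) (YS ++ flatten Xs ++ YE).
  apply: spec_mul hS' h2 => w wS; apply/negP => wB.
  by move/hasP: d1; apply; exists w.
have hU := spec_eq (fun w => esym (perm_mem pe w)) h3.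
have szU : (size YS + size (flatten Xs) + size YE = k)%N.
  by rewrite -sU (perm_size pe) !size_cat addnA.
exists (- (pS * (pX * pE))); split; [|split; [|split]].
- rewrite size_opp (leq_trans (size_polyMleq _ _)) //.
  have hm := size_polyMleq pX pE.
  move: hm sS sX sE hc szU; set a := size pS; set b := size pX; set c := size pE.
  set e := size (pX * pE); set n := count _ _; lia.
- move=> u uU1; have uW' : u \in W by rewrite mW uU1.
  have [a1 b1 _] := hU u uW'; rewrite hornerN oppr_ge0.
  by case: (boolP (u \in V)) => uV; [rewrite b1|rewrite ltW ?a1].
- move=> u uU1 uV; have uW' : u \in W by rewrite mW uU1.
  have [a1 _ _] := hU u uW'; by rewrite hornerN oppr_gt0 a1.
- move=> v vV; have vW : v \in W by rewrite mW vV orbT.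
  have [_ b1 c1] := hU v vW; rewrite hornerN oppr_le0.
  by case: (boolP (v \in U)) => vU; [rewrite b1|rewrite ltW ?c1].
Qed.

Lemma convm_perm (R : realFieldType) (d : nat) (S S' : seq R) (x : 'rV[R]_d) :
  perm_eq S S' -> convm S x -> convm S' x.
Proof.
move=> pe [mu [m0 [m1 mx]]]; exists mu; split; [|split].
- by move=> u; rewrite -(perm_mem pe) => /m0.
- by rewrite -(perm_big _ pe).
- by rewrite -(perm_big _ pe).
Qed.

Lemma conv_back (R : realFieldType) (d : nat) (U V : seq R) (x : 'rV[R]_d) :
  convm [seq u <- U | u \in V] x -> convm U x.
Proof.
move=> [mu [m0 [m1 mx]]].
exists (fun u => if u \in V then mu u else 0); split; [|split].
- move=> u uU; case: ifP => uV //; apply: m0; by rewrite mem_filter uV.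
- by rewrite -big_mkcond -big_filter.
- rewrite mx big_filter big_mkcond; apply: eq_bigr => u _.
  by case: ifP => _ //; rewrite scale0r.
Qed.

Unset Implicit Arguments.

Theorem mainTheorem6 (R : realFieldType) (d k : nat) (U1 U2 : seq R) :
  (1 <= k <= d)%N ->
  uniq U1 -> size U1 = k ->
  uniq U2 -> size U2 = k ->
  (good_decomposition d k (Wseq U1 U2) U1 \/
   good_decomposition d k (Wseq U1 U2) U2) ->
  forall x : 'rV[R]_d,
    (conv (map (moment d) U1) x /\ conv (map (moment d) U2) x) <->
    conv (map (moment d) [seq u <- U1 | u \in U2]) x.
Proof.
move=> /andP[k1 kd] uU1 s1 uU2 s2 gd x.
have sW : sorted (fun x y : R => x <= y) (Wseq U1 U2) by apply: sort_sorted; exact: le_total.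
have uW : uniq (Wseq U1 U2) by rewrite sort_uniq undup_uniq.
have mW : forall w, (w \in Wseq U1 U2) = (w \in U1) || (w \in U2).
  by move=> w; rewrite mem_sort mem_undup mem_cat.
have pF : perm_eq [seq u <- U2 | u \in U1] [seq u <- U1 | u \in U2].
  apply: uniq_perm; rewrite ?filter_uniq // => w; rewrite !mem_filter andbC.
  by [].
have uF : uniq [seq u <- U1 | u \in U2] by rewrite filter_uniq.
rewrite (convE _ uU1) (convE _ uU2) (convE _ uF); split.
- case=> c1 c2; case: gd => gd.
  + have [p [sp [h1 [h2 h3]]]] := construct sW uW mW uU1 s1 kd gd.
    exact: sep_conv sp h1 h2 h3 c1 c2.
  + have mW' : forall w, (w \in Wseq U1 U2) = (w \in U2) || (w \in U1).
      by move=> w; rewrite mW orbC.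
    have [p [sp [h1 [h2 h3]]]] := construct sW uW mW' uU2 s2 kd gd.
    exact: convm_perm pF (sep_conv sp h1 h2 h3 c2 c1).
- move=> c; split; first exact: conv_back c.
  apply: (@conv_back _ _ U2 U1); apply: convm_perm c.
  by rewrite perm_sym.
Qed.
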